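(* In the setting described in the context, the number of solutions $x\in(\mathbb{R}^* )^n$ of the system $S$ equals $2^{\,n-1-\mathrm{rk}(\bar B)}$ times the number of nonzero real roots $r$ of the eliminant $f$ satisfying $$\Big(\tfrac{g_1(r)}{r^{l_1}}\Big)^{\epsilon_1}\cdots\Big(\tfrac{g_n(r)}{r^{l_n}}\Big)^{\epsilon_n}>0$$ for every $\epsilon=(\epsilon_1,\dots,\epsilon_n)\in\mathbb{Z}^n$ whose reduction modulo $2$ belongs to $\ker\bar B$.
   Context: A circuit is a set $\mathcal{C}\subset\mathbb{Z}^n$ of $n+2$ points whose affine span is $\mathbb{R}^n$. Let $\ell$ be a positive integer and $w_1,\dots,w_n\in\mathbb{Z}^n$ be such that $\mathcal{C}=\{0,\ell e_1,w_1,\dots,w_n\}$ is a circuit. Write $w_i=l_ie_1+v_i$ with $l_i\in\mathbb{Z}$ and $v_i\in\{0\}\times\mathbb{Z}^{n-1}\cong\mathbb{Z}^{n-1}$. For $i=1,\dots,n$ let $g_i(x)=a_i+b_ix^{\ell}$ with $a_i,b_i$ nonzero real numbers, such that no two of the $g_i$ have a common complex root. The system $S$ is $x^{w_i}=g_i(x_1)$, $i=1,\dots,n$, where $x=(x_1,\dots,x_n)$ and $x^{w}=x_1^{w^1}\cdots x_n^{w^n}$. After reordering $w_1,\dots,w_n$, the (unique up to sign) primitive integer linear relation among $e_1,w_1,\dots,w_n$ is written $\lambda_0e_1+\sum_{i=1}^{t}\lambda_iw_i=\sum_{i=t+1}^{\nu}\lambda_iw_i$ with $1\le\nu\le n$,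 $0\le t\le\nu$, $\lambda_0,\dots,\lambda_\nu$ coprime integers, $\lambda_0\ge0$ and $\lambda_1,\dots,\lambda_\nu>0$. The eliminant of $S$ is $f(x)=x^{\lambda_0}\prod_{i=1}^{t}g_i(x)^{\lambda_i}-\prod_{i=t+1}^{\nu}g_i(x)^{\lambda_i}$. $\bar B\in M_{n-1,n}(\mathbb{Z}/2)$ is the matrix whose $i$-th column is the reduction modulo $2$ of $v_i$, and $\mathrm{rk}(\bar B)$ its rank over $\mathbb{Z}/2$. *)

(* Defs.v *)
From HB Require Import structures.
From mathcomp Require Import all_boot all_order all_algebra.
From mathcomp Require Import reals.
From mathcomp Require Import complex.
Set Implicit Arguments. Unset Strict Implicit. Unset Printing Implicit Defensive.
Import Order.TTheory GRing.Theory Num.Theory.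
Local Open Scope ring_scope.

(* Conventions: the ambient dimension is n = m.+1 (n >= 1 is forced by the
   circuit hypothesis).  Coordinates are indexed by 'I_(m.+1), coordinate
   ord0 being the first one (e_1).  The points w_1..w_n are the rows of an
   integer matrix W : W i j = j-th coordinate of w_i. *)

Definition exact_count (T : eqType) (P : T -> Prop) (k : nat) : Prop :=
  exists s : seq T, [/\ uniq s, (forall x, x \in s <-> P x) & size s = k].

Section Setting.
Variables (R : realType) (m : nat).
Local Notation n := m.+1.

Definition gfun (ell : nat) (a b : 'I_n -> R) (i : 'I_n) (x : R) : R :=
  a i + b i * x ^+ ell.

Definition gfunC (ell : nat) (a b : 'I_n -> R) (i : 'I_n) (z : R[i]) : R[i] :=
  ((a i)%:C)%C + ((b i)%:C)%C * z ^+ ell.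

(* the circuit C = {0, ell e1, w_1, ..., w_n} : n+2 distinct points of Z^n
   whose affine span is R^n *)
Definition is_circuit (ell : nat) (W : 'M[int]_n) : Prop :=
  [/\ (forall i, row i W != 0),
      (forall i, row i W != \row_j (ell%:Z * (j == ord0)%:Z)),
      (0 < ell)%N,
      (forall i j, i != j -> row i W != row j W)
    & \rank (col_mx (\row_j ((ell%:R : R) * (j == ord0)%:R))
                    (map_mx (fun z : int => (z%:~R : R)) W)) = n].

(* mu0 e1 + sum_i mu_i w_i = 0, mu0 >= 0, (mu0, mu_1, ..., mu_n) coprime:
   this is the relation  lambda_0 e1 + sum_{i<=t} lambda_i w_i
   = sum_{t<i<=nu} lambda_i w_i  with mu_i = lambda_i (i <= t),
   mu_i = - lambda_i (t < i <= nu), mu_i = 0 (i > nu). *)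
Definition primitive_relation (W : 'M[int]_n) (mu0 : nat) (mu : 'I_n -> int)
  : Prop :=
  (forall j : 'I_n, mu0%:Z * (j == ord0)%:Z + \sum_i mu i * W i j = 0) /\
  (forall d : nat, (d %| mu0)%N -> (forall i, (d %| `|mu i|)%N) -> d = 1%N).

Definition eliminant (ell : nat) (a b : 'I_n -> R) (mu0 : nat)
  (mu : 'I_n -> int) (x : R) : R :=
  x ^+ mu0 * \prod_(i | 0 < mu i) gfun ell a b i x ^+ `|mu i|%N
  - \prod_(i | mu i < 0) gfun ell a b i x ^+ `|mu i|%N.

(* Bbar in M_{n-1,n}(Z/2): i-th column = v_i mod 2, where
   v_i = (coordinates 2..n of w_i) *)
Definition Bbar (W : 'M[int]_n) : 'M['F_2]_(m, n) :=
  \matrix_(k < m, i < n) ((W i (lift ord0 k))%:~R : 'F_2).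

Definition red2 (eps : 'I_n -> int) : 'cV['F_2]_n :=
  \col_i ((eps i)%:~R : 'F_2).

Definition monom (W : 'M[int]_n) (i : 'I_n) (x : 'rV[R]_n) : R :=
  \prod_j (x 0 j) ^ (W i j).

Definition is_solution (ell : nat) (a b : 'I_n -> R) (W : 'M[int]_n)
  (x : 'rV[R]_n) : Prop :=
  (forall j, x 0 j != 0) /\
  (forall i, monom W i x = gfun ell a b i (x 0 ord0)).

Definition good_root (ell : nat) (a b : 'I_n -> R) (W : 'M[int]_n)
  (mu0 : nat) (mu : 'I_n -> int) (r : R) : Prop :=
  [/\ r != 0, eliminant ell a b mu0 mu r = 0 &
      forall eps : 'I_n -> int, Bbar W *m red2 eps = 0 ->
        0 < \prod_i (gfun ell a b i r / r ^ (W i ord0)) ^ (eps i)].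

End Setting.

(* Main.v *)
Require Import Defs.
From HB Require Import structures.
From mathcomp Require Import all_boot all_order all_algebra.
From mathcomp Require Import reals.
From mathcomp Require Import complex.
From mathcomp Require Import boolp sequences exp.
From mathcomp.algebra_tactics Require Import ring.
Import Order.TTheory GRing.Theory Num.Theory.
Local Open Scope ring_scope.
Set Implicit Arguments. Unset Strict Implicit. Unset Printing Implicit Defensive.

Lemma card_F2 : #|'F_2| = 2%N.
Proof. by rewrite card_Fp. Qed.

Lemma F2count m n (B : 'M['F_2]_(m, n)) (sig : 'rV_n) :
  (sig <= B)%MS -> exact_count (fun s : 'rV_m => s *m B = sig) (2 ^ (m - \rank B)).
Proof.
case/submxP=> s0 Hs0.
set K := row_base (kermx B).
have KB : K *m B = 0.
  by apply/sub_kermxP; rewrite eq_row_base.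
exists [seq s0 + t *m K | t <- enum {: 'rV['F_2]_(\rank (kermx B))}].
split.
- rewrite map_inj_uniq ?enum_uniq // => t1 t2 /addrI.
  exact: (row_free_inj (row_base_free _)).
- move=> s; split.
    by case/mapP=> t _ ->; rewrite mulmxDl -mulmxA KB mulmx0 addr0.
  move=> hs.
  have : (s - s0 <= K)%MS.
    by rewrite eq_row_base; apply/sub_kermxP; rewrite mulmxBl hs Hs0 subrr.
  case/submxP=> t ht; apply/mapP; exists t; first by rewrite mem_enum.
  by rewrite -ht addrC subrK.
- by rewrite size_map -cardT card_mx card_F2 mul1n mxrank_ker.
Qed.

Lemma F2solv m n (B : 'M['F_2]_(m, n)) (sig : 'rV_n) :
  (forall e : 'cV_n, B *m e = 0 -> sig *m e = 0) -> (sig <= B)%MS.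
Proof.
move=> H; rewrite submxE; apply/eqP/matrixP=> i j.
have := H (col j (cokermx B)).
have -> : B *m col j (cokermx B) = 0.
  apply/matrixP=> k l; rewrite [RHS]mxE.
  transitivity ((B *m cokermx B) k j); last by rewrite mulmx_coker mxE.
  by rewrite !mxE; apply: eq_bigr=> p _; rewrite !mxE.
move/(_ erefl)/matrixP/(_ i ord0) => h.
transitivity ((sig *m col j (cokermx B)) i ord0); last by rewrite h !mxE.
by rewrite !mxE; apply: eq_bigr=> p _; rewrite !mxE.
Qed.

Section Signs.
Variable R : realType.

Definition sg2 (x : R) : 'F_2 := ((x < 0)%R)%:R.
Definition sgnF (t : 'F_2) : R := if t == 0 then 1 else -1.

Lemma F2cases (t : 'F_2) : t = 0 \/ t = 1.
Proof. by case: t => [[|[|]]] //= ?; [left|right]; apply/eqP. Qed.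

Lemma sg2M x y : x != 0 -> y != 0 -> sg2 (x * y) = sg2 x + sg2 y.
Proof.
move=> x0 y0; rewrite /sg2 mulr_lt0 x0 y0 /=.
by case: (x < 0); case: (y < 0) => //=; apply/eqP.
Qed.

Lemma sg2V x : sg2 x^-1 = sg2 x.
Proof. by rewrite /sg2 invr_lt0. Qed.

Lemma sg2Xn x k : x != 0 -> sg2 (x ^+ k) = sg2 x *+ k.
Proof.
move=> x0; elim: k => [|k IH]; first by rewrite expr0 mulr0n /sg2 ltr10.
by rewrite exprS sg2M ?expf_neq0 // IH mulrS.
Qed.

Lemma F2_oppr (t : 'F_2) : - t = t.
Proof. by case: (F2cases t) => ->; apply/eqP. Qed.

Lemma sg2Xz x (z : int) : x != 0 -> sg2 (x ^ z) = sg2 x * z%:~R.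
Proof.
move=> x0; case: z => k.
  by rewrite /exprz sg2Xn // -mulr_natr.
rewrite NegzE -exprnN /exprz sg2V sg2Xn // intrN F2_oppr mulr_natr.
by [].
Qed.

Lemma sg2_prod (I : Type) (r : seq I) (P : pred I) (F : I -> R) :
  (forall i, P i -> F i != 0) ->
  \prod_(i <- r | P i) F i != 0 /\ sg2 (\prod_(i <- r | P i) F i) = \sum_(i <- r | P i) sg2 (F i).
Proof.
move=> HF; apply: (big_ind2 (fun x s => x != 0 /\ sg2 x = s)).
- by rewrite oner_neq0 /sg2 ltr10.
- by move=> x1 s1 x2 s2 [h1 <-] [h2 <-]; rewrite mulf_neq0 // sg2M.
- by move=> i /HF.
Qed.

Lemma sgnF_sg2 x : sgnF (sg2 x) * `|x| = x.
Proof.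
rewrite /sgnF /sg2; case: ltrP => hx.
  by rewrite (_ : (true%:R == 0 :> 'F_2) = false) ?ltr0_norm // ?mulN1r ?opprK //; apply/eqP.
by rewrite eqxx mul1r ger0_norm.
Qed.

Lemma sg2_sgnF t p : 0 < p -> sg2 (sgnF t * p) = t.
Proof.
move=> p0; rewrite /sg2 /sgnF; case: (F2cases t) => ->.
  by rewrite eqxx mul1r ltNge ltW.
rewrite (_ : (1 == 0 :> 'F_2) = false); last by apply/eqP.
by rewrite mulN1r oppr_lt0 p0.
Qed.

Lemma norm_sgnF t p : 0 < p -> `|sgnF t * p| = p.
Proof.
by move=> p0; rewrite normrM /sgnF; case: (_ == 0); rewrite ?normrN normr1 mul1r gtr0_norm.
Qed.

Lemma sgnF_neq0 t p : 0 < p -> sgnF t * p != 0.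
Proof.
move=> p0; apply: mulf_neq0; last by rewrite gt_eqF.
by rewrite /sgnF; case: ifP => _; rewrite ?oppr_eq0 ?oner_eq0.
Qed.

Lemma eq_sg2 x y : `|x| = `|y| -> sg2 x = sg2 y -> x = y.
Proof. by move=> h1 h2; rewrite -(sgnF_sg2 x) -(sgnF_sg2 y) h1 h2. Qed.

Lemma pos_sg2 x : x != 0 -> (0 < x) <-> sg2 x = 0.
Proof.
move=> x0; rewrite /sg2; split.
  by move=> hx; rewrite ltNge ltW.
case: (ltrP x 0) => hx h.
  by move/eqP: h.
by rewrite lt_def x0 hx.
Qed.

Lemma normrz (x : R) (z : int) : `|x ^ z| = `|x| ^ z.
Proof. by case: z => k; rewrite /exprz ?normfV normrX. Qed.

End Signs.
Arguments sgnF {R}.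

Section RealLemmas.
Variable R : realType.

Lemma ln_exprz (x : R) (z : int) : 0 < x -> ln (x ^ z) = z%:~R * ln x.
Proof.
move=> x0; case: z => k.
  by rewrite /exprz lnXn // -mulr_natl.
rewrite NegzE -exprnN /exprz lnV ?posrE ?exprn_gt0 // lnXn // intrN mulNr mulr_natl.
by [].
Qed.

Lemma expR_z (x : R) (z : int) : expR x ^ z = expR (z%:~R * x).
Proof.
case: z => k.
  by rewrite /exprz -expRM_natl.
by rewrite NegzE -exprnN /exprz intrN mulNr expRN -expRM_natl.
Qed.

Lemma ln_prod (I : Type) (r : seq I) (P : pred I) (F : I -> R) :
  (forall i, P i -> 0 < F i) ->
  0 < \prod_(i <- r | P i) F i /\ ln (\prod_(i <- r | P i) F i) = \sum_(i <- r | P i) ln (F i).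
Proof.
move=> HF; apply: (big_ind2 (fun x s => 0 < x /\ ln x = s)).
- by rewrite ltr01 ln1.
- by move=> x1 s1 x2 s2 [h1 <-] [h2 <-]; rewrite mulr_gt0 // lnM.
- by move=> i /HF.
Qed.

Lemma exprz_gt0 (x : R) (z : int) : 0 < x -> 0 < x ^ z.
Proof. by move=> x0; case: z => k; rewrite /exprz ?invr_gt0 exprn_gt0. Qed.

End RealLemmas.

Section Circuit.
Variables (R : realType) (m : nat) (ell : nat) (W : 'M[int]_m.+1) (mu0 : nat) (mu : 'I_m.+1 -> int).
Hypothesis hcirc : is_circuit R ell W.
Hypothesis hrel : primitive_relation W mu0 mu.

Definition VT : 'M[R]_(m, m.+1) := \matrix_(k, i) (W i (lift ord0 k))%:~R.

Lemma VT_free : row_free VT.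
Proof.
case: hcirc => _ _ _ _.
set A := col_mx _ _ => hrank.
have fA : row_free A^T by rewrite /row_free mxrank_tr hrank.
rewrite -kermx_eq0; apply/eqP/row_matrixP => k; rewrite row0.
set u := row k (kermx VT).
have hu : u *m VT = 0 by rewrite /u -row_mul mulmx_ker row0.
clearbody u.
pose ut : 'rV[R]_(m.+1) := \row_j oapp (fun k' => u 0 k') 0 (unlift ord0 j).
have hut : ut *m A^T = 0.
  rewrite tr_col_mx mul_mx_row; apply/rowP => p; rewrite !mxE.
  case: (split p) => q; rewrite !mxE.
    rewrite big1 // => j _; rewrite !mxE.
    case: unliftP => [k' ->|->] /=.
      by rewrite !mulr0.
    by rewrite mul0r.
  rewrite big_ord_recl mxE unlift_none mul0r add0r.
  transitivity ((u *m VT) 0 q); last by rewrite hu mxE.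
  by rewrite mxE; apply: eq_bigr => k' _; rewrite !mxE liftK.
have ut0 : ut = 0 by apply: (row_free_inj fA); rewrite hut mul0mx.
apply/rowP => k'; have /rowP/(_ (lift ord0 k')) := ut0.
by rewrite !mxE liftK.
Qed.


Lemma rel_lift k : \sum_i mu i * W i (lift ord0 k) = 0.
Proof.
have := hrel.1 (lift ord0 k).
have := neq_lift ord0 k; rewrite eq_sym => /negbTE ->.
by rewrite mulr0 add0r.
Qed.

Lemma rel0 : mu0%:Z + \sum_i mu i * W i ord0 = 0.
Proof. by have := hrel.1 ord0; rewrite eqxx mulr1. Qed.

Lemma mu_nz : exists i, mu i != 0.
Proof.
have [i hi|h] := pickP (fun i => mu i != 0); first by exists i.
exfalso.
have h0 : forall i, mu i = 0 by move=> i; have := h i; move/negbFE/eqP.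
have hm0 : mu0 = 0%N.
  have := rel0; rewrite big1 ?addr0; last by move=> i _; rewrite h0 mul0r.
  by case.
have hd : forall i, (2 %| `|mu i|)%N by move=> i; rewrite h0.
by have := hrel.2 2%N; rewrite hm0 dvdn0 => /(_ erefl hd).
Qed.

Lemma posol_ex (d : 'I_m.+1 -> R) : (forall i, 0 < d i) ->
  \prod_i d i ^ mu i = 1 ->
  exists p : 'rV[R]_m, (forall k, 0 < p 0 k) /\
    forall i, \prod_k (p 0 k) ^ (W i (lift ord0 k)) = d i.
Proof.
move=> hd hprod.
pose mc : 'cV[R]_(m.+1) := \col_i (mu i)%:~R.
have VTmc : VT *m mc = 0.
  apply/colP => k; rewrite !mxE.
  transitivity ((\sum_i mu i * W i (lift ord0 k))%:~R : R); last by rewrite rel_lift.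
  rewrite (big_morph (fun z : int => z%:~R : R) (intrD R) (erefl : (0:int)%:~R = 0 :> R)).
  by apply: eq_bigr => i _; rewrite !mxE intrM mulrC.
have rk_mc : \rank mc = 1%N.
  apply/eqP; rewrite eqn_leq rank_leq_col lt0n mxrank_eq0.
  case: mu_nz => i0 hi0; apply/eqP => /colP/(_ i0); rewrite !mxE => /eqP.
  by rewrite intr_eq0 (negbTE hi0).
have rkK : \rank (kermx mc) = m by rewrite mxrank_ker rk_mc subn1.
have sVK : (VT <= kermx mc)%MS by apply/sub_kermxP.
have sKV : (kermx mc <= VT)%MS.
  by have := mxrank_leqif_sup sVK; rewrite rkK (eqP VT_free); case=> _ <-.
pose Lr : 'rV[R]_(m.+1) := \row_i ln (d i).
have hL : (Lr <= kermx mc)%MS.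
  apply/sub_kermxP; apply/rowP => z; rewrite !mxE.
  transitivity (ln (\prod_i d i ^ mu i)); last by rewrite hprod ln1.
  have [_ ->] := ln_prod (P := xpredT) (index_enum _) (fun i _ => exprz_gt0 (mu i) (hd i)).
  by apply: eq_bigr => i _; rewrite !mxE ln_exprz // mulrC.
have : (Lr <= VT)%MS by apply: submx_trans sKV.
case/submxP => D hD.
exists (\row_k expR (D 0 k)); split; first by move=> k; rewrite mxE expR_gt0.
move=> i.
have -> : d i = expR (Lr 0 i) by rewrite mxE lnK // posrE.
rewrite hD mxE expR_sum; apply: eq_bigr => k _.
by rewrite !mxE expR_z mulrC.
Qed.

Lemma posol_uniq (p q : 'rV[R]_m) : (forall k, 0 < p 0 k) -> (forall k, 0 < q 0 k) ->
  (forall i, \prod_k (p 0 k) ^ (W i (lift ord0 k)) = \prod_k (q 0 k) ^ (W i (lift ord0 k))) ->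
  p = q.
Proof.
move=> hp hq H.
pose lp (p : 'rV[R]_m) := \row_k ln (p 0 k).
have key (p' : 'rV[R]_m) : (forall k, 0 < p' 0 k) ->
    lp p' *m VT = \row_i ln (\prod_k p' 0 k ^ W i (lift ord0 k)).
  move=> hp'; apply/rowP => i; rewrite !mxE.
  have [_ ->] := ln_prod (P := xpredT) (index_enum _) (fun k _ => exprz_gt0 (W i (lift ord0 k)) (hp' k)).
  by apply: eq_bigr => k _; rewrite !mxE ln_exprz // mulrC.
have : lp p = lp q.
  apply: (row_free_inj VT_free); rewrite /= key // key //.
  by apply/rowP => i; rewrite !mxE H.
move/rowP => h; apply/rowP => k; have := h k; rewrite !mxE => e.
by rewrite -(lnK (x:=p 0 k)) ?posrE ?hp // e lnK // posrE.
Qed.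

End Circuit.

Section ZPow.
Variable F : fieldType.

Lemma prod_exprz (I : Type) (r : seq I) (P : pred I) (G : I -> F) (z : int) :
  (\prod_(i <- r | P i) G i) ^ z = \prod_(i <- r | P i) G i ^ z.
Proof. exact: (big_morph (fun x => x ^ z) (fun x y => expfzMl x y z) (exp1rz _ z)). Qed.

Lemma exprz_sum (I : Type) (r : seq I) (P : pred I) (f : I -> int) (y : F) :
  y != 0 -> \prod_(i <- r | P i) y ^ f i = y ^ (\sum_(i <- r | P i) f i).
Proof.
move=> y0.
by apply: esym; apply: (big_morph (fun z : int => y ^ z)) => [m n|]; rewrite ?expfzDr ?expr0z.
Qed.

Lemma prod_neq0 (I : Type) (r : seq I) (P : pred I) (G : I -> F) :
  (forall i, P i -> G i != 0) -> \prod_(i <- r | P i) G i != 0.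
Proof.
move=> H; apply: (big_ind (fun x => x != 0)) => //; first exact: oner_neq0.
by move=> x y hx hy; rewrite mulf_neq0.
Qed.

End ZPow.

Section Main.
Variables (R : realType) (m : nat) (ell : nat) (W : 'M[int]_m.+1)
  (a b : 'I_m.+1 -> R) (mu0 : nat) (mu : 'I_m.+1 -> int).
Hypothesis hcirc : is_circuit R ell W.
Hypothesis hrel : primitive_relation W mu0 mu.

Local Notation n := m.+1.
Local Notation g := (gfun ell a b).

Definition cc (r : R) (i : 'I_n) : R := g i r / r ^ (W i ord0).

Definition FibP (r : R) (y : 'rV[R]_m) : Prop :=
  (forall k, y 0 k != 0) /\ forall i, \prod_k (y 0 k) ^ (W i (lift ord0 k)) = cc r i.

Definition joinr (r : R) (y : 'rV[R]_m) : 'rV[R]_n :=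
  \row_j oapp (fun k => y 0 k) r (unlift ord0 j).
Definition tailr (x : 'rV[R]_n) : 'rV[R]_m := \row_k x 0 (lift ord0 k).

Lemma tail_join r y : tailr (joinr r y) = y.
Proof. by apply/rowP => k; rewrite !mxE liftK. Qed.

Lemma join0 r y : joinr r y 0 ord0 = r.
Proof. by rewrite mxE unlift_none. Qed.

Lemma join_tail (x : 'rV[R]_n) : joinr (x 0 ord0) (tailr x) = x.
Proof.
apply/rowP => j; rewrite !mxE; case: unliftP => [k ->|->] /=; last by [].
by rewrite mxE.
Qed.

Lemma monom_split (x : 'rV[R]_n) i :
  monom W i x = x 0 ord0 ^ W i ord0 * \prod_k (tailr x 0 k) ^ (W i (lift ord0 k)).
Proof. by rewrite /monom big_ord_recl; congr (_ * _); apply: eq_bigr => k _; rewrite mxE. Qed.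

Lemma sg2_monom (y : 'rV[R]_m) i : (forall k, y 0 k != 0) ->
  \prod_k (y 0 k) ^ (W i (lift ord0 k)) != 0 /\
  sg2 (\prod_k (y 0 k) ^ (W i (lift ord0 k))) = ((\row_k sg2 (y 0 k)) *m Bbar W) 0 i.
Proof.
move=> hy.
have [h1 h2] := sg2_prod (P := xpredT) (F := fun k => y 0 k ^ W i (lift ord0 k))
   (index_enum _) (fun k _ => expfz_neq0 _ (hy k)).
split => //; rewrite h2 mxE; apply: eq_bigr => k _.
by rewrite sg2Xz // !mxE.
Qed.


Lemma gmu_split r : (forall i, g i r != 0) ->
  \prod_i g i r ^ mu i =
  (\prod_(i | 0 < mu i) g i r ^+ `|mu i|) / (\prod_(i | mu i < 0) g i r ^+ `|mu i|).
Proof.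
move=> gnz.
rewrite (big_mkcond (fun i => 0 < mu i)) (big_mkcond (fun i => mu i < 0)) /= -prodf_div.
apply: eq_bigr => i _.
have [h|h|h] := ltrgtP (mu i) 0.
- rewrite div1r.
  have -> : mu i = - (`|mu i|%N)%:Z by rewrite ltz0_abs // opprK.
  by rewrite -exprnN abszN.
- rewrite divr1.
  have E : mu i = (`|mu i|%N)%:Z by rewrite gtz0_abs.
  by rewrite {1}E.
- by rewrite h expr0z divr1.
Qed.

Lemma cmu r : r != 0 -> (forall i, g i r != 0) ->
  \prod_i cc r i ^ mu i =
  (\prod_(i | 0 < mu i) g i r ^+ `|mu i|) / (\prod_(i | mu i < 0) g i r ^+ `|mu i|) * r ^+ mu0.
Proof.
move=> r0 gnz.
rewrite -gmu_split //.
transitivity (\prod_i (g i r ^ mu i * r ^ (W i ord0 * - mu i))).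
  apply: eq_bigr => i _; rewrite /cc expfzMl exprz_inv exprz_exp.
  by [].
rewrite big_split /=; congr (_ * _).
rewrite exprz_sum //.
have -> : \sum_i W i ord0 * - mu i = mu0%:Z.
  rewrite (eq_bigr (fun i => - (mu i * W i ord0))); last by move=> i _; rewrite mulrN mulrC.
  by rewrite sumrN; move/eqP: (rel0 hrel); rewrite addr_eq0 => /eqP ->.
by [].
Qed.

Lemma elim_iff r : r != 0 -> (forall i, g i r != 0) ->
  (\prod_i cc r i ^ mu i = 1 <-> eliminant ell a b mu0 mu r = 0).
Proof.
move=> r0 gnz; rewrite cmu // /eliminant.
set P := \prod_(i | _) _; set Q := \prod_(i | _) _.
have Q0 : Q != 0 by rewrite /Q prod_neq0 // => i _; rewrite expf_neq0.
split.
  move/(congr1 (fun t => t * Q)); rewrite mul1r mulrAC divfK // => h.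
  by rewrite mulrC h subrr.
move/eqP; rewrite subr_eq0 => /eqP h.
by rewrite mulrAC [P * _]mulrC h divff.
Qed.

Lemma cc_nz r i : r != 0 -> g i r != 0 -> cc r i != 0.
Proof. by move=> r0 gi; rewrite /cc mulf_neq0 ?invr_neq0 ?expfz_neq0. Qed.

Lemma fiber_count r : r != 0 -> (forall i, g i r != 0) ->
  \prod_i cc r i ^ mu i = 1 ->
  (forall e : 'cV['F_2]_n, Bbar W *m e = 0 -> (\row_i sg2 (cc r i)) *m e = 0) ->
  exact_count (FibP r) (2 ^ (m - \rank (Bbar W))).
Proof.
move=> r0 gnz hmu hsg.
have cnz i : cc r i != 0 by apply: cc_nz.
have [S [uS memS szS]] := F2count (F2solv hsg).
have hd : forall i, 0 < `|cc r i| by move=> i; rewrite normr_gt0.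
have hdm : \prod_i `|cc r i| ^ mu i = 1.
  transitivity (`|\prod_i cc r i ^ mu i|); last by rewrite hmu normr1.
  by rewrite normr_prod; apply: eq_bigr => i _; rewrite normrz.
have [p [pp hp]] := posol_ex hcirc hrel hd hdm.
pose yy (s : 'rV['F_2]_m) : 'rV[R]_m := \row_k (sgnF (s 0 k) * p 0 k).
exists [seq yy s | s <- S]; split.
- rewrite map_inj_uniq // => s1 s2 h; apply/rowP => k.
  have /rowP/(_ k) := h; rewrite !mxE => e.
  by rewrite -(sg2_sgnF (s1 0 k) (pp k)) e sg2_sgnF.
- move=> y; split.
  + case/mapP => s sS ->; have hs := (memS s).1 sS.
    have ynz : forall k, yy s 0 k != 0 by move=> k; rewrite mxE sgnF_neq0.
    split => // i.
    have [nz sgi] := sg2_monom i ynz.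
    apply: eq_sg2.
    * rewrite -(hp i) normr_prod; apply: eq_bigr => k _.
      by rewrite normrz mxE norm_sgnF.
    * rewrite sgi (_ : \row_k sg2 (yy s 0 k) = s) ?hs ?mxE //.
      by apply/rowP => k; rewrite !mxE sg2_sgnF.
  + case=> ynz hy.
    set s := \row_k sg2 (y 0 k).
    have hs : s *m Bbar W = \row_i sg2 (cc r i).
      apply/rowP => i; rewrite [RHS]mxE -hy.
      by have [_ ->] := sg2_monom i ynz.
    have sS : s \in S by apply/memS.
    have pq : \row_k `|y 0 k| = p.
      apply: (posol_uniq hcirc).
      * by move=> k; rewrite mxE normr_gt0.
      * by [].
      * move=> i; rewrite hp -(hy i) normr_prod; apply: eq_bigr => k _.
        by rewrite normrz mxE.
    apply/mapP; exists s => //; apply/rowP => k.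
    by rewrite !mxE -pq mxE sgnF_sg2.
- by rewrite size_map.
Qed.

Lemma join_sol r y : r != 0 -> FibP r y -> is_solution ell a b W (joinr r y).
Proof.
move=> r0 [ynz hy]; split.
  by move=> j; rewrite mxE; case: unliftP => [k _|_] /=.
move=> i; rewrite monom_split join0 tail_join (hy i) /cc [_ * (_ / _)]mulrC divfK //.
by rewrite expfz_neq0.
Qed.

Lemma sol_good x : is_solution ell a b W x ->
  good_root ell a b W mu0 mu (x 0 ord0) /\ FibP (x 0 ord0) (tailr x).
Proof.
case=> hx heq; set r := x 0 ord0.
have r0 : r != 0 := hx ord0.
have tnz : forall k, tailr x 0 k != 0 by move=> k; rewrite mxE.
have gm i : g i r = r ^ W i ord0 * \prod_k tailr x 0 k ^ W i (lift ord0 k).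
  by rewrite -heq monom_split.
have gnz i : g i r != 0.
  by rewrite gm mulf_neq0 ?expfz_neq0 ?prod_neq0 // => k _; rewrite expfz_neq0.
have fib : FibP r (tailr x).
  split => // i; rewrite /cc gm [_ / _]mulrC mulKf //.
  by rewrite expfz_neq0.
have hmu : \prod_i cc r i ^ mu i = 1.
  transitivity (\prod_i \prod_k tailr x 0 k ^ (W i (lift ord0 k) * mu i)).
    apply: eq_bigr => i _; rewrite -(fib.2 i) prod_exprz; apply: eq_bigr => k _.
    by rewrite exprz_exp.
  rewrite exchange_big /=; apply: big1 => k _.
  rewrite exprz_sum //.
  rewrite (eq_bigr (fun i => mu i * W i (lift ord0 k))); last by move=> i _; rewrite mulrC.
  by rewrite (rel_lift hrel) expr0z.
have cnz i : cc r i != 0 by apply: cc_nz.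
split => //; split => //.
  by apply/(elim_iff r0 gnz).
move=> eps he.
change (0 < \prod_i cc r i ^ eps i).
have pnz : \prod_i cc r i ^ eps i != 0.
  by apply: prod_neq0 => i _; exact: expfz_neq0.
apply/(pos_sg2 pnz).
have [_ ->] := sg2_prod (P := xpredT) (F := fun i => cc r i ^ eps i) (index_enum _)
  (fun i _ => expfz_neq0 _ (cnz i)).
pose s := \row_k sg2 (tailr x 0 k).
transitivity (((s *m Bbar W) *m red2 eps) 0 0); last by rewrite -mulmxA he mulmx0 mxE.
rewrite mxE; apply: eq_bigr => i _.
rewrite sg2Xz // [red2 _ _ _]mxE -(fib.2 i).
by have [_ ->] := sg2_monom i tnz.
Qed.

Lemma good_fib r : good_root ell a b W mu0 mu r ->
  [/\ r != 0, (forall i, g i r != 0), \prod_i cc r i ^ mu i = 1 &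
   (forall e : 'cV['F_2]_n, Bbar W *m e = 0 -> (\row_i sg2 (cc r i)) *m e = 0)].
Proof.
case=> r0 hel hsg.
have gnz i : g i r != 0.
  apply/negP => /eqP gi0.
  pose eps : 'I_n -> int := fun j => if j == i then 2 else 0.
  have : Bbar W *m red2 eps = 0.
    have -> : red2 eps = 0.
      by apply/colP => j; rewrite !mxE /eps; case: (j == i); apply/eqP.
    by rewrite mulmx0.
  move/hsg; rewrite (bigD1 i) //= {1}/eps eqxx gi0 mul0r exp0rz /=.
  by rewrite mul0r ltxx.
have cnz i : cc r i != 0 by apply: cc_nz.
split => //; first by apply/(elim_iff r0 gnz).
move=> e he.
pose eps : 'I_n -> int := fun j => (nat_of_ord (e j 0))%:Z.
have re : red2 eps = e.
  by apply/colP => j; rewrite !mxE /eps; case: (F2cases (e j 0)) => ->; apply/eqP.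
have epsE i : (eps i)%:~R = e i 0 by have /colP/(_ i) := re; rewrite mxE.
have := hsg eps; rewrite re => /(_ he) hpos.
have pnz : \prod_i cc r i ^ eps i != 0.
  by apply: prod_neq0 => i _; exact: expfz_neq0.
have := (pos_sg2 pnz).1 hpos.
have [_ ->] := sg2_prod (P := xpredT) (F := fun i => cc r i ^ eps i) (index_enum _)
  (fun i _ => expfz_neq0 _ (cnz i)).
move=> hsum; apply/matrixP => z z'; rewrite !ord1 [RHS]mxE.
transitivity (\sum_i sg2 (cc r i ^ eps i)); last by [].
rewrite mxE; apply: eq_bigr => i _.
by rewrite sg2Xz // -epsE mxE.
Qed.

End Main.

Lemma roots_list (R : fieldType) (p : {poly R}) : p != 0 ->
  exists L : seq R, forall x, root p x -> x \in L.
Proof.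
move: {2}(size p) (leqnn (size p)) => k; elim: k p => [|k IH] p hs hp.
  by move: hs; rewrite leqn0 size_poly_eq0 (negbTE hp).
have [[x hx]|nx] := pselect (exists x, root p x); last first.
  by exists [::] => x hx; exfalso; apply: nx; exists x.
case/factor_theorem: hx => q hq.
have q0 : q != 0 by apply: contraNneq hp => q0; rewrite hq q0 mul0r.
have hsq : (size q <= k)%N.
  move: hs; rewrite hq size_mul ?polyXsubC_eq0 // size_XsubC addn2 /=.
  by [].
have [L' HL'] := IH q hsq q0.
exists (x :: L') => y; rewrite hq rootM root_XsubC in_cons => /orP [/HL' ->|->].
  by rewrite orbT.
by [].
Qed.

Lemma filter_exists (T : eqType) (L : seq T) (P : T -> Prop) :
  (forall x, P x -> x \in L) -> exists s, uniq s /\ forall x, x \in s <-> P x.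
Proof.
move=> HL; exists (undup [seq x <- L | `[< P x >]]); split; first exact: undup_uniq.
move=> x; rewrite mem_undup mem_filter; split.
  by case/andP => /asboolP.
by move=> Px; rewrite HL // andbT; apply/asboolP.
Qed.

Section Poly.
Variables (R : realType) (m : nat) (ell : nat) (W : 'M[int]_m.+1)
  (a b : 'I_m.+1 -> R) (mu0 : nat) (mu : 'I_m.+1 -> int).
Hypothesis hrel : primitive_relation W mu0 mu.
Hypothesis hell : (0 < ell)%N.
Hypothesis ha : forall i, a i != 0.
Hypothesis hb : forall i, b i != 0.
Hypothesis hsep : forall i j, i != j -> a i * b j != a j * b i.

Local Notation n := m.+1.

Definition lin (i : 'I_n) : {poly R} := (a i)%:P + (b i)%:P * 'X.
Definition Pp : {poly R} := \prod_(i | 0 < mu i) lin i ^+ `|mu i|.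
Definition Qp : {poly R} := \prod_(i | mu i < 0) lin i ^+ `|mu i|.
Definition Fp : {poly R} := 'X^mu0 * (Pp \Po 'X^ell) - (Qp \Po 'X^ell).

Lemma lin_eval i t : (lin i).[t] = a i + b i * t.
Proof. by rewrite /lin !hornerE. Qed.

Lemma Fp_eval r : Fp.[r] = eliminant ell a b mu0 mu r.
Proof.
rewrite /Fp /eliminant !hornerE !horner_comp !hornerE /Pp /Qp !horner_prod.
by congr (_ * _ - _); apply: eq_bigr => i _; rewrite horner_exp lin_eval.
Qed.
Lemma linprod_eval (P : pred 'I_n) t :
  (\prod_(i | P i) lin i ^+ `|mu i|).[t] = \prod_(i | P i) (a i + b i * t) ^+ `|mu i|.
Proof. by rewrite horner_prod; apply: eq_bigr => i _; rewrite horner_exp lin_eval. Qed.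

Lemma Fp_neq0 : Fp != 0.
Proof.
case: (posnP mu0) => [m00|m0pos].
- have -> : Fp = (Pp - Qp) \Po 'X^ell by rewrite /Fp m00 expr0 mul1r comp_polyB.
  rewrite comp_poly_eq0 ?size_polyXn ?ltnS //.
  have [i0 hi0] := mu_nz hrel.
  pose t0 := - a i0 / b i0.
  have h0 : a i0 + b i0 * t0 = 0.
    by rewrite /t0; field; rewrite hb.
  have hj j : j != i0 -> a j + b j * t0 != 0.
    move=> ji; apply/negP => /eqP h.
    have : a j + b j * t0 = (a j * b i0 - a i0 * b j) / b i0.
      by rewrite /t0; field; rewrite hb.
    rewrite h => /esym /eqP; rewrite mulf_eq0 invr_eq0 (negbTE (hb i0)) orbF subr_eq0.
    by rewrite (negbTE (hsep ji)).
  apply/negP => /eqP /(congr1 (fun p => p.[t0])).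
  rewrite hornerD hornerN horner0 /Pp /Qp !linprod_eval.
  move/eqP; rewrite subr_eq0 => /eqP.
  have [hp|hn|he] := ltrgtP (mu i0) 0; last by move: hi0; rewrite he eqxx.
  + rewrite [X in _ = X](bigD1 i0) //= -/t0 h0 expr0n.
    have -> : `|mu i0|%N == 0%N = false by rewrite absz_eq0 (negbTE hi0).
    rewrite mulr0n mul0r => /eqP; apply/negP; rewrite prod_neq0 // => j hj'.
    rewrite expf_neq0 // hj //; apply: contraTneq hj' => ->.
    by rewrite (lt_gtF hp).
  + rewrite [X in X = _](bigD1 i0) //= -/t0 h0 expr0n.
    have -> : `|mu i0|%N == 0%N = false by rewrite absz_eq0 (negbTE hi0).
    rewrite mulr0n mul0r => /esym /eqP; apply/negP; rewrite prod_neq0 // => j hj'.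
    rewrite expf_neq0 // hj //; apply: contraTneq hj' => ->.
    by rewrite (lt_gtF hn).
- apply/negP => /eqP /(congr1 (fun p => p.[0])); rewrite Fp_eval horner0 /eliminant.
  rewrite expr0n eqn0Ngt m0pos /= mulr0n mul0r sub0r => /eqP; rewrite oppr_eq0 => /eqP hQ.
  suff : \prod_(i | mu i < 0) gfun ell a b i 0 ^+ `|mu i| != 0 by rewrite hQ eqxx.
  rewrite prod_neq0 // => i _; rewrite expf_neq0 // /gfun expr0n.
  by rewrite eqn0Ngt hell /= mulr0n mulr0 addr0.
Qed.

End Poly.

Section Final.
Variables (R : realType) (m : nat) (ell : nat) (W : 'M[int]_m.+1)
  (a b : 'I_m.+1 -> R) (mu0 : nat) (mu : 'I_m.+1 -> int).
Hypothesis hcirc : is_circuit R ell W.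
Hypothesis hrel : primitive_relation W mu0 mu.

Lemma sols_of (G : seq R) : uniq G -> (forall r, r \in G -> good_root ell a b W mu0 mu r) ->
  exists S : seq 'rV[R]_m.+1, [/\ uniq S,
    (forall x, x \in S <-> is_solution ell a b W x /\ x 0 ord0 \in G) &
    size S = (size G * 2 ^ (m - \rank (Bbar W)))%N].
Proof.
elim: G => [|r G IH] /=.
  move=> _ _; exists [::]; split => // x; split => //; by case.
case/andP => rG uG hG.
have hG' : forall r', r' \in G -> good_root ell a b W mu0 mu r'.
  by move=> r' h; apply: hG; rewrite in_cons h orbT.
have [S' [uS' HS' szS']] := IH uG hG'.
have [r0 gnz hmu hsg] := good_fib hrel (hG r (mem_head _ _)).
have [L [uL HL szL]] := fiber_count hcirc hrel r0 gnz hmu hsg.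
exists ([seq joinr r y | y <- L] ++ S'); split.
- rewrite cat_uniq uS' andbT map_inj_uniq ?uL /=; last first.
    by move=> y1 y2 h; rewrite -(tail_join r y1) h tail_join.
  apply/hasPn => x /HS' [_ hx]; apply/mapP => [[y _ hy]].
  by move: hx; rewrite hy join0 (negbTE rG).
- move=> x; rewrite mem_cat in_cons; split.
    case/orP.
      case/mapP => y yL ->; rewrite join0 eqxx; split => //.
      by apply: join_sol r0 _; apply/HL.
    by move/HS' => [hx ->]; rewrite orbT.
  case=> hx /orP [/eqP hr|hxG].
    apply/orP; left; apply/mapP; exists (tailr x); last by rewrite -hr join_tail.
    apply/HL; rewrite -hr; exact: (sol_good hrel hx).2.
  by apply/orP; right; apply/HS'.
- by rewrite size_cat size_map szL szS' mulSn.
Qed.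

End Final.

Lemma sep_of_C (R : realType) (m ell : nat) (a b : 'I_m.+1 -> R) :
  (0 < ell)%N -> (forall i, b i != 0) ->
  (forall i j, i != j -> forall z : R[i],
     ~ (gfunC ell a b i z = 0 /\ gfunC ell a b j z = 0)) ->
  forall i j, i != j -> a i * b j != a j * b i.
Proof.
move=> hell hb hC i j ij; apply/negP => /eqP h.
pose t := - a i / b i.
pose z : R[i] := ell.-root ((t%:C)%C).
have hz : z ^+ ell = (t%:C)%C by rewrite /z rootCK.
apply: (hC i j ij z); split; rewrite /gfunC hz -rmorphM -rmorphD.
  have -> : a i + b i * t = 0 by rewrite /t; field; rewrite hb.
  by rewrite rmorph0.
have -> : a j + b j * t = (a j * b i - a i * b j) / b i by rewrite /t; field; rewrite hb.
by rewrite h subrr mul0r rmorph0.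
Qed.

Theorem proposition1p3 (R : realType) (m : nat) (ell : nat) (W : 'M[int]_m.+1)
  (a b : 'I_m.+1 -> R) (mu0 : nat) (mu : 'I_m.+1 -> int) :
  is_circuit R ell W ->
  (forall i, a i != 0) -> (forall i, b i != 0) ->
  (forall i j, i != j -> forall z : R[i],
     ~ (gfunC ell a b i z = 0 /\ gfunC ell a b j z = 0)) ->
  primitive_relation W mu0 mu ->
  exists k : nat,
    exact_count (good_root ell a b W mu0 mu) k /\
    exact_count (is_solution ell a b W)
      (2 ^ (m.+1 - 1 - \rank (Bbar W)) * k)%N.
Proof.
move=> hc ha hb hC hr.
have hell : (0 < ell)%N by case: hc.
have hsep := sep_of_C hell hb hC.
have Fnz := Fp_neq0 hr hell ha hb hsep.
have [L HL] := roots_list Fnz.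
have hsub : forall r, good_root ell a b W mu0 mu r -> r \in L.
  by move=> r hgr; apply: HL; rewrite /root Fp_eval; case: hgr => _ -> _.
have [G [uG HG]] := filter_exists hsub.
exists (size G); split; first by exists G.
have [S [uS HS szS]] := sols_of hc hr uG (fun r rG => (HG r).1 rG).
exists S; split => //.
  move=> x; rewrite HS; split; first by case.
  by move=> hx; split => //; apply/HG; exact: (sol_good hr hx).1.
by rewrite szS mulnC subn1.
Qed.
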